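(* Let $A$ and $B$ be automata with $A\le_{*T}B$. Then there exists an automaton $C$ such that $A\le_H C$ and $C\le_B B$.
   Context: An automaton $A$ consists of a set $\mathrm{states}(A)$ of states, a nonempty set $\mathrm{start}(A)\subseteq\mathrm{states}(A)$ of start states, a set $\mathrm{acts}(A)$ of actions containing a distinguished internal action $\tau$, and a set $\mathrm{steps}(A)\subseteq\mathrm{states}(A)\times\mathrm{acts}(A)\times\mathrm{states}(A)$ of steps; write $s\xrightarrow{a}_A t$ for $(s,a,t)\in\mathrm{steps}(A)$. An execution fragment of $A$ is a finite or infinite alternating sequence $s_0a_1s_1a_2s_2\cdots$ of states and actions, beginning with a state and, if finite, ending with a state, such that $s_{i-1}\xrightarrow{a_i}_A s_i$ for all $i>0$. An execution is an execution fragment whose first state is a start state. The trace of an execution fragment is the subsequence of its non-$\tau$ actions; a trace of $A$ is the trace of some execution of $A$, and $\mathrm{traces}^*(A)$ is the set of finite traces of $A$. $A\le_{*T}B$ means $\mathrm{traces}^*(A)\subseteq\mathrm{traces}^*(B)$. For a relation $R$ write $R[s]=\{u\mid (s,u)\in R\}$. A step refinement from $A$ to $B$ is a partial function $r:\mathrm{states}(A)\rightharpoonup\mathrm{states}(B)$ such that (1) if $s\in\mathrm{start}(A)$ then $s\in\mathrm{dom}(r)$ and $r(s)\in\mathrm{start}(B)$; (2) if $s\xrightarrow{a}_A t$ and $s\in\mathrm{dom}(r)$ then $t\in\mathrm{dom}(r)$ and either $r(s)=r(t)$ and $a=\tau$, or $r(s)\xrightarrow{a}_B r(t)$. A normed forward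 simulation from $A$ to $B$ is a pair $(f,n)$ where $f\subseteq\mathrm{states}(A)\times\mathrm{states}(B)$ and $n:\mathrm{steps}(A)\times\mathrm{states}(B)\to S$ for some set $S$ with a well-founded strict order $<$, such that: (1) if $s\in\mathrm{start}(A)$ then $f[s]\cap\mathrm{start}(B)\neq\emptyset$; (2) if $s\xrightarrow{a}_A t$ and $u\in f[s]$ then (a) $u\in f[t]$ and $a=\tau$, or (b) there is $v\in f[t]$ with $u\xrightarrow{a}_B v$, or (c) there is $v\in f[s]$ with $u\xrightarrow{\tau}_B v$ and $n(s\xrightarrow{a}t,v)<n(s\xrightarrow{a}t,u)$. A normed backward simulation from $A$ to $B$ is a pair $(b,n)$ where $b\subseteq\mathrm{states}(A)\times\mathrm{states}(B)$ is total (every $s\in\mathrm{states}(A)$ has $b[s]\neq\emptyset$) and $n:(\mathrm{steps}(A)\cup\mathrm{start}(A))\times\mathrm{states}(B)\to S$ for some set $S$ with a well-founded strict order $<$, such that: (1) if $s\in\mathrm{start}(A)$ and $u\in b[s]$ then (a) $u\in\mathrm{start}(B)$, or (b) there is $v\in b[s]$ with $v\xrightarrow{\tau}_B u$ and $n(s,v)<n(s,u)$; (2) if $t\xrightarrow{a}_A s$ and $u\in b[s]$ then (a) $u\in b[t]$ and $a=\tau$, or (b) there is $v\in b[t]$ with $v\xrightarrow{a}_B u$, or (c) there is $v\in b[s]$ with $v\xrightarrow{\tau}_B u$ and $n(t\xrightarrow{a}s,v)<n(t\xrightarrow{a}s,u)$. Write $A\le_B B$ if a normed backward simulation from $A$ to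 $B$ exists. A normed history relation from $A$ to $B$ is a pair $(r,n)$ such that $r$ is a step refinement from $B$ to $A$ and $(r^{-1},n)$ is a normed forward simulation from $A$ to $B$. Write $A\le_H B$ if one exists. *)

(* Defs.v *)
From Stdlib Require Import List Relations Wellfounded.
Import ListNotations.
Set Implicit Arguments.

Section Auto.
Variables (Act : Type) (tau : Act).

Record automaton := {
  state : Type;
  start : state -> Prop;
  acts : Act -> Prop;
  step : state -> Act -> state -> Prop;
  start_nonempty : exists s, start s;
  tau_in_acts : acts tau;
  step_acts : forall s a t, step s a t -> acts a
}.

(* [frag A s tr t]: there is a finite execution fragment of A from s to t
   whose trace (subsequence of non-tau actions) is tr. *)
Inductive frag (A : automaton) : state A -> list Act -> state A -> Prop :=
| frag_nil : forall s, frag A s [] s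
| frag_tau : forall s t u tr, step A s tau t -> frag A t tr u -> frag A s tr u
| frag_vis : forall s a t u tr, a <> tau -> step A s a t -> frag A t tr u ->
    frag A s (a :: tr) u.

Definition ftraces (A : automaton) (tr : list Act) : Prop :=
  exists s t, start A s /\ frag A s tr t.

Definition trace_incl (A B : automaton) : Prop :=
  forall tr, ftraces A tr -> ftraces B tr.

Definition wf_strict_order (S : Type) (lt : S -> S -> Prop) : Prop :=
  well_founded lt /\ (forall x, ~ lt x x) /\ transitive S lt.

Definition step_refinement (A B : automaton) (r : state A -> option (state B)) : Prop :=
  (forall s, start A s -> exists u, r s = Some u /\ start B u) /\
  (forall s a t u, step A s a t -> r s = Some u ->
     exists v, r t = Some v /\ ((u = v /\ a = tau) \/ step B u a v)).

Definition normed_forward_sim (A B : automaton) (f : state A -> state B -> Prop)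
  (S : Type) (lt : S -> S -> Prop)
  (n : (state A * Act * state A) -> state B -> S) : Prop :=
  wf_strict_order lt /\
  (forall s, start A s -> exists u, f s u /\ start B u) /\
  (forall s a t u, step A s a t -> f s u ->
     (f t u /\ a = tau) \/
     (exists v, f t v /\ step B u a v) \/
     (exists v, f s v /\ step B u tau v /\ lt (n (s, a, t) v) (n (s, a, t) u))).

(* Normed backward simulation (b, n) from A to B; the norm is defined on
   (steps(A) + start(A)) x states(B), encoded by a sum type. *)
Definition normed_backward_sim (A B : automaton) (b : state A -> state B -> Prop)
  (S : Type) (lt : S -> S -> Prop)
  (n : ((state A * Act * state A) + state A) -> state B -> S) : Prop :=
  wf_strict_order lt /\
  (forall s, exists u, b s u) /\
  (forall s u, start A s -> b s u ->
     start B u \/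
     (exists v, b s v /\ step B v tau u /\ lt (n (inr s) v) (n (inr s) u))) /\
  (forall t a s u, step A t a s -> b s u ->
     (b t u /\ a = tau) \/
     (exists v, b t v /\ step B v a u) \/
     (exists v, b s v /\ step B v tau u /\
        lt (n (inl (t, a, s)) v) (n (inl (t, a, s)) u))).

Definition backward_le (A B : automaton) : Prop :=
  exists (b : state A -> state B -> Prop) (S : Type) (lt : S -> S -> Prop) n,
    normed_backward_sim A B b lt n.

Definition history_le (A B : automaton) : Prop :=
  exists (r : state B -> option (state A)) (S : Type) (lt : S -> S -> Prop) n,
    step_refinement B A r /\
    normed_forward_sim A B (fun s u => r u = Some s) lt n.

End Auto.

(* Main.v *)
Require Import Defs.
From Stdlib Require Import List Relations Wellfounded Classical Lia Arith.
Import ListNotations.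
Set Implicit Arguments.

Section Proof.
Variables (Act : Type) (tau : Act).

Lemma frag_app (A : automaton tau) x tr1 y tr2 z :
  frag A x tr1 y -> frag A y tr2 z -> frag A x (tr1 ++ tr2) z.
Proof.
  induction 1; intros Hz; simpl.
  - exact Hz.
  - eapply frag_tau; eauto.
  - eapply frag_vis; eauto.
Qed.

Lemma frag_snoc_tau (A : automaton tau) x tr y z :
  frag A x tr y -> step A y tau z -> frag A x tr z.
Proof.
  intros H1 H2. rewrite <- (app_nil_r tr). eapply frag_app; eauto.
  eapply frag_tau; eauto. constructor.
Qed.

Lemma frag_snoc_vis (A : automaton tau) x tr y a z :
  frag A x tr y -> a <> tau -> step A y a z -> frag A x (tr ++ [a]) z.
Proof.
  intros H1 H2 H3. eapply frag_app; eauto.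
  eapply frag_vis; eauto. constructor.
Qed.

Fixpoint taus (A : automaton tau) (k : nat) (x y : state A) : Prop :=
  match k with
  | 0 => x = y
  | S k => exists v, taus A k x v /\ step A v tau y
  end.

Lemma frag_taus_end (A : automaton tau) k : forall x tr y z,
  frag A x tr y -> taus A k y z -> frag A x tr z.
Proof.
  induction k; simpl; intros x tr y z H1 H2.
  - subst; auto.
  - destruct H2 as [v [Hv Hs]]. eapply frag_snoc_tau; [eapply IHk; eauto | exact Hs].
Qed.

Lemma taus_cons (A : automaton tau) k : forall x v y,
  step A x tau v -> taus A k v y -> taus A (S k) x y.
Proof.
  induction k; simpl; intros x v y H1 H2.
  - subst. exists x. auto.
  - destruct H2 as [w [Hw Hs]]. exists w. split; auto.
    eapply IHk; eauto.
Qed.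

Lemma frag_nil_taus (A : automaton tau) x tr y :
  frag A x tr y -> tr = [] -> exists k, taus A k x y.
Proof.
  induction 1; intros E.
  - exists 0. reflexivity.
  - destruct (IHfrag E) as [k Hk]. exists (S k). eapply taus_cons; eauto.
  - discriminate.
Qed.

Lemma frag_decomp (A : automaton tau) x tr' y :
  frag A x tr' y -> forall tr a, tr' = tr ++ [a] -> a <> tau ->
  exists w1 w2 k, frag A x tr w1 /\ step A w1 a w2 /\ taus A k w2 y.
Proof.
  induction 1; intros tr1 a0 E Ha.
  - destruct tr1; discriminate.
  - destruct (IHfrag tr1 a0 E Ha) as [w1 [w2 [k [H1 [H2 H3]]]]].
    exists w1, w2, k. split; auto. eapply frag_tau; eauto.
  - destruct tr1 as [|b tr1]; simpl in E; injection E; intros E2 E1; subst.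
    + destruct (frag_nil_taus H1 eq_refl) as [k Hk].
      exists s, t, k. split; [constructor|]. auto.
    + destruct (IHfrag tr1 a0 eq_refl Ha) as [w1 [w2 [k [H3 [H4 H5]]]]].
      exists w1, w2, k. split; auto. eapply frag_vis; eauto.
Qed.

Lemma nat_min (P : nat -> Prop) :
  (exists k, P k) -> exists k, P k /\ forall j, P j -> k <= j.
Proof.
  intros [k Hk]. apply NNPP; intro H.
  assert (forall n j, j <= n -> ~ P j).
  { induction n; intros j Hj Pj; apply H; exists j; split; auto;
      intros j' Pj'; destruct (le_lt_dec j j'); auto; exfalso.
    - lia.
    - apply (IHn j'); auto; lia. }
  apply (H0 k k); auto.
Qed.

Definition ltS (X Y : nat -> Prop) : Prop :=
  exists k, X k /\ forall j, Y j -> k < j.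

Lemma ltS_wf : wf_strict_order ltS.
Proof.
  split; [|split].
  - assert (Hn : forall m X, X m -> Acc ltS X).
    { intro m. induction m as [m IH] using (well_founded_induction lt_wf).
      intros X HX. constructor. intros Y [k [Hk Hlt]].
      apply (IH k); auto. }
    intro X. constructor. intros Y [k [Hk _]]. eapply Hn; eauto.
  - intros X [k [Hk Hlt]]. specialize (Hlt k Hk). lia.
  - intros X Y Z [k [Hk H1]] [l [Hl H2]]. exists k. split; auto.
    intros j Hj. specialize (H1 l Hl). specialize (H2 j Hj). lia.
Qed.

Section C.
Variable A : automaton tau.

Definition reachA (p : state A * list Act) : Prop :=
  exists s0, start A s0 /\ frag A s0 (snd p) (fst p).
Definition CState := {p : state A * list Act | reachA p}.
Definition ext (a : Act) (tr tr' : list Act) :=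
  (a = tau /\ tr' = tr) \/ (a <> tau /\ tr' = tr ++ [a]).
Definition Cstart (p : CState) := start A (fst (proj1_sig p)) /\ snd (proj1_sig p) = [].
Definition Cstep (p : CState) (a : Act) (q : CState) :=
  step A (fst (proj1_sig p)) a (fst (proj1_sig q)) /\
  ext a (snd (proj1_sig p)) (snd (proj1_sig q)).

Lemma Cstart_ne : exists p, Cstart p.
Proof.
  destruct (start_nonempty A) as [s Hs].
  assert (R : reachA (s, [])) by (exists s; split; auto; constructor).
  exists (exist _ (s, []) R). split; simpl; auto.
Qed.

Lemma Cstep_acts : forall p a q, Cstep p a q -> acts A a.
Proof. intros p a q [H _]. eapply step_acts; eauto. Qed.

Definition mkC : automaton tau :=
  {| state := CState; start := Cstart; acts := acts A; step := Cstep;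
     start_nonempty := Cstart_ne; tau_in_acts := tau_in_acts A;
     step_acts := Cstep_acts |}.

Lemma hist : history_le A mkC.
Proof.
  exists (fun p : CState => Some (fst (proj1_sig p))), unit, (fun _ _ => False),
    (fun _ _ => tt).
  split.
  - split.
    + intros p [H1 H2]. eexists; split; eauto.
    + intros p a q u H E. injection E; intro; subst.
      eexists; split; [reflexivity|]. right. apply H.
  - split; [|split].
    + split; [|split].
      * intro x. constructor. intros y [].
      * intros x [].
      * intros x y z [].
    + intros s Hs.
      assert (R : reachA (s, [])) by (exists s; split; auto; constructor).
      exists (exist _ (s, []) R). simpl. split; auto. split; auto.
    + intros s a t p H E. injection E; intro; subst.
      right; left.
      destruct p as [[s' tr] Rp]; simpl in *.
      destruct (classic (a = tau)) as [Ha | Ha].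
      * assert (R : reachA (t, tr)).
        { destruct Rp as [s0 [H0 F]]. exists s0; split; auto. simpl in *.
          subst. eapply frag_snoc_tau; eauto. }
        exists (exist _ (t, tr) R). simpl. split; auto.
        split; simpl; auto. left; auto.
      * assert (R : reachA (t, tr ++ [a])).
        { destruct Rp as [s0 [H0 F]]. exists s0; split; auto. simpl in *.
          eapply frag_snoc_vis; eauto. }
        exists (exist _ (t, tr ++ [a]) R). simpl. split; auto.
        split; simpl; auto. right; auto.
Qed.

Variable B : automaton tau.
Hypothesis HT : trace_incl A B.

Definition reachB (tr : list Act) (u : state B) :=
  exists u0, start B u0 /\ frag B u0 tr u.

Definition bnorm (x : (CState * Act * CState) + CState) (u : state B) : nat -> Prop :=
  match x with
  | inl (p, a, q) => fun k => exists w1 w2, reachB (snd (proj1_sig p)) w1 /\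
                              step B w1 a w2 /\ taus B k w2 u
  | inr p => fun k => exists w, start B w /\ taus B k w u
  end.

Lemma back : backward_le mkC B.
Proof.
  exists (fun (p : CState) u => reachB (snd (proj1_sig p)) u), (nat -> Prop), ltS, bnorm.
  split; [apply ltS_wf|split; [|split]].
  - intros [[s tr] [s0 [H0 F]]]. simpl.
    destruct (HT (tr := tr)) as [u0 [u [Hu0 Fu]]].
    { exists s0, s. auto. }
    exists u, u0. auto.
  - intros p u [Hs Hn] [u0 [Hu0 Fu]]. simpl in *.
    rewrite Hn in Fu.
    destruct (nat_min (bnorm (inr p) u)) as [k [Hk Hmin]].
    { destruct (frag_nil_taus Fu eq_refl) as [k Hk]. exists k, u0. auto. }
    destruct k as [|k]; destruct Hk as [w [Hw Hk]]; simpl in Hk.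
    + left. subst. auto.
    + right. destruct Hk as [v [Hv Hst]]. exists v. split; [|split; auto].
      * exists w. split; auto. rewrite Hn. eapply frag_taus_end; eauto. constructor.
      * exists k. split.
        -- exists w. auto.
        -- intros j Hj. specialize (Hmin j Hj). lia.
  - intros t a s u [Hst Hext] [u0 [Hu0 Fu]]. simpl in *.
    destruct Hext as [[Ha E] | [Ha E]].
    + left. split; auto. rewrite E in Fu. exists u0; auto.
    + rewrite E in Fu.
      destruct (nat_min (bnorm (inl (t, a, s)) u)) as [k [Hk Hmin]].
      { destruct (frag_decomp Fu _ eq_refl Ha) as [w1 [w2 [k [H1 [H2 H3]]]]].
        exists k, w1, w2. split; auto. exists u0; auto. }
      destruct Hk as [w1 [w2 [Hw1 [Hs12 Hk]]]].
      destruct k as [|k]; simpl in Hk.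
      * right; left. subst. exists w1. auto.
      * right; right. destruct Hk as [v [Hv Hsv]]. exists v. split; [|split; auto].
        -- destruct Hw1 as [x0 [Hx0 Fx]]. exists x0. split; auto. rewrite E.
           eapply frag_taus_end; eauto. eapply frag_snoc_vis; eauto.
        -- exists k. split.
           ++ exists w1, w2. auto.
           ++ intros j Hj. specialize (Hmin j Hj). lia.
Qed.

End C.
End Proof.

Theorem mainTheorem3 (Act : Type) (tau : Act) (A B : automaton tau) :
  trace_incl A B ->
  exists C : automaton tau, history_le A C /\ backward_le C B.
Proof.
  intros HT. exists (mkC A). split.
  - apply hist.
  - apply back. exact HT.
Qed.
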